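(* Let $\nu\ge 1$ be an integer and $M\ge1$. For $c\in(0,1)$ let $\chi^2_\nu(c)$ denote the $c$-quantile of the chi-squared distribution with $\nu$ degrees of freedom. Let $K_1^*,\dots,K_M^*$ be real numbers and define, for each $i$, $$c_i^0=\sup\{c\in(0,1)\;:\;K_i^*>\chi^2_\nu(c)\},$$ and, with $\overline{K^*}=\sum_{i=1}^M K_i^*$, $$\overline{c^0}=\sup\Big\{c\in(0,1)\;:\;\overline{K^*}>\sum_{i=1}^M\chi^2_\nu(c)\Big\}.$$ Then $\overline{c^0}\ \ge\ \min_i c_i^0$.
   Context: Interpretation: there are $M$ computing nodes; $K_i^*$ is the observed value of a chi-squared goodness-of-fit test statistic on node $i$ (with $\nu=t-w-1$ degrees of freedom, $t$ the number of cells and $w$ the number of fitted parameters), $c_i^0$ is the confidence level of the fitted local distribution on node $i$, the global test statistic is the sum $\overline{K}=\sum_i K_i$ of the local ones, and $\overline{c^0}$ is the global confidence level. Suprema are taken over the indicated subsets of $(0,1)$. *)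

(* Defs.v *)
From HB Require Import structures.
From mathcomp Require Import all_boot all_order all_algebra.
From mathcomp Require Import all_classical all_reals all_analysis.
Set Implicit Arguments. Unset Strict Implicit. Unset Printing Implicit Defensive.
Import Order.TTheory GRing.Theory Num.Theory.
Local Open Scope classical_set_scope.
Local Open Scope ring_scope.

Definition chi2_kernel {R : realType} (nu : nat) (x : R) : R :=
  if 0 < x then x `^ (nu%:R / 2 - 1) * expR (- x / 2) else 0.

(* CDF of the chi-squared distribution: the kernel integrated up to x,
   normalized by its total integral (= 2^(nu/2) Gamma(nu/2)). *)
Definition chi2_cdf {R : realType} (nu : nat) (x : R) : R :=
  fine (\int[@lebesgue_measure R]_(t in `]-oo, x]) (chi2_kernel nu t)%:E)
  / fine (\int[@lebesgue_measure R]_(t in [set: R]) (chi2_kernel nu t)%:E).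

Definition chi2_quantile {R : realType} (nu : nat) (c : R) : R :=
  inf [set x : R | c <= chi2_cdf nu x].

Definition conf_level {R : realType} (nu : nat) (K : R) : R :=
  sup [set c : R | 0 < c < 1 /\ chi2_quantile nu c < K].

Definition global_conf_level {R : realType} (nu M : nat) (K : 'I_M -> R) : R :=
  sup [set c : R | 0 < c < 1 /\
       \sum_(i < M) chi2_quantile nu c < \sum_(i < M) K i].

(* Main.v *)
Require Import Defs.
From HB Require Import structures.
From mathcomp Require Import all_boot all_order all_algebra.
From mathcomp Require Import all_classical all_reals all_analysis.
From mathcomp Require Import measurable_realfun.
From mathcomp Require Import lra.
Import Order.TTheory GRing.Theory Num.Theory.
Local Open Scope ring_scope.
Local Open Scope classical_set_scope.

Section S.
Variables (R : realType) (nu : nat).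

Lemma kern_ge0 (x : R) : 0 <= chi2_kernel nu x.
Proof.
rewrite /chi2_kernel; case: ifP => // _.
by apply: mulr_ge0; [exact: powR_ge0 | exact: ltW (expR_gt0 _)].
Qed.

Lemma kern_meas : measurable_fun [set: R] (fun x => (chi2_kernel nu x)%:E).
Proof.
apply/measurable_EFinP; rewrite /chi2_kernel.
apply: measurable_fun_ifT.
- apply: measurable_fun_ltr => //.
- apply: measurable_funM.
  + exact: measurable_powR.
  + apply: measurableT_comp; first exact: measurable_expR.
    apply: measurable_funM => //.
- exact: measurable_cst.
Qed.

Lemma P_nonpos (x : R) : x <= 0 ->
  (\int[@lebesgue_measure R]_(t in `]-oo, x]) (chi2_kernel nu t)%:E = 0)%E.
Proof.
move=> x0; apply: integral0_eq => t /=; rewrite in_itv /= => tx.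
rewrite /chi2_kernel; case: ifP => //= t0.
by have := lt_le_trans t0 (le_trans tx x0); rewrite ltxx.
Qed.

Local Open Scope ereal_scope.
Let Pint (x : R) := \int[@lebesgue_measure R]_(t in `]-oo, x]) (chi2_kernel nu t)%:E.
Let Iint := \int[@lebesgue_measure R]_(t in [set: R]) (chi2_kernel nu t)%:E.

Lemma P_le_I x : Pint x <= Iint.
Proof.
apply: ge0_subset_integral => //; first exact: kern_meas.
by move=> t _; rewrite lee_fin kern_ge0.
Qed.

Lemma P_ge0 x : 0 <= Pint x.
Proof. by apply: integral_ge0 => t _; rewrite lee_fin kern_ge0. Qed.

Lemma P_cvg : Pint (n%:R) @[n --> \oo] --> Iint.
Proof.
have -> : Iint = \int[@lebesgue_measure R]_(t in \bigcup_n `]-oo, (n%:R : R)]) (chi2_kernel nu t)%:E.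
  congr integral; apply/seteqP; split => // x _.
  exists (Num.truncn x).+1 => //=; rewrite in_itv /=.
  exact: (ltW (truncnS_gt x)).
apply: ge0_nondecreasing_set_cvg_integral.
- move=> n m nm; rewrite subsetEset => x /=; rewrite !in_itv /= => h.
  by apply: le_trans h _; rewrite ler_nat.
- by [].
- move=> i; apply: measurable_funS (kern_meas) => //.
- by move=> i x _; rewrite lee_fin kern_ge0.
Qed.

Lemma P_nd : nondecreasing_seq (fun n : nat => Pint n%:R).
Proof.
move=> n m nm; apply: ge0_subset_integral => //.
- exact: measurable_funS (kern_meas).
- by move=> t _; rewrite lee_fin kern_ge0.
- move=> x /=; rewrite !in_itv /= => h.
  by apply: le_trans h _; rewrite ler_nat.
Qed.

Lemma exists_big (c c' : R) : (0 < c)%R -> (exists x, c <= chi2_cdf nu x)%R ->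
  (c' < 1)%R -> exists x, (c' <= chi2_cdf nu x)%R.
Proof.
move=> c0 [x0 hx0] c'1.
have I0 : 0 <= Iint by apply: integral_ge0 => t _; rewrite lee_fin kern_ge0.
have e1 : Iint = ereal_sup (range (fun n : nat => Pint n%:R)).
  have h1 := ereal_nondecreasing_cvgn P_nd.
  by rewrite -(cvg_lim _ P_cvg) // (cvg_lim _ h1).
move: hx0; rewrite /chi2_cdf -/(Pint x0) -/Iint.
case hI: Iint e1 I0 => [r| |] //= e1 I0; last first.
  by rewrite invr0 mulr0 => /(lt_le_trans c0); rewrite ltxx.
rewrite lee_fin in I0.
have [r0|rpos] := eqVneq r 0%R.
  by rewrite r0 invr0 mulr0 => /(lt_le_trans c0); rewrite ltxx.
have r0 : (0 < r)%R by rewrite lt_def rpos I0.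
move=> _.
have : ((c' * r)%:E < ereal_sup (range (fun n : nat => Pint n%:R))).
  by rewrite -e1 lte_fin -ltr_pdivlMr // divff ?gt_eqF.
case/ereal_sup_gt => _ [n _ <-] hn.
exists n%:R; rewrite /chi2_cdf -/(Pint n%:R).
have := P_le_I n%:R; rewrite hI; have := P_ge0 n%:R.
move: hn.
case: (Pint n%:R) => [p| |] //= hn _ _.
rewrite lte_fin in hn.
by rewrite ler_pdivlMr // ltW.
Qed.
Local Close Scope ereal_scope.

Lemma cdf_nonpos (x : R) : x <= 0 -> chi2_cdf nu x = 0.
Proof. by move=> x0; rewrite /chi2_cdf P_nonpos // mul0r. Qed.

Lemma S_lb (c : R) : 0 < c -> lbound [set x | c <= chi2_cdf nu x] 0.
Proof.
move=> c0 x /= hx; rewrite leNgt; apply/negP => x0.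
by move: hx; rewrite (cdf_nonpos _ (ltW x0)) => h; have := lt_le_trans c0 h; rewrite ltxx.
Qed.

Lemma q_mono (c c' : R) : 0 < c -> c <= c' -> c' < 1 ->
  chi2_quantile nu c <= chi2_quantile nu c'.
Proof.
move=> c0 cc' c'1; rewrite /chi2_quantile.
have [[x hx]|hn] := pselect (exists x, c' <= chi2_cdf nu x).
  apply: lb_le_inf; first by exists x.
  move=> y /= hy; apply: ge_inf; first by exists 0; exact: S_lb.
  by rewrite /= (le_trans cc').
have hn' : ~ exists x, c <= chi2_cdf nu x.
  by move=> h; apply: hn; exact: (@exists_big c c' c0 h c'1).
have -> : [set x | c <= chi2_cdf nu x] = set0.
  by apply/seteqP; split => x //= h; apply: hn'; exists x.
have -> : [set x | c' <= chi2_cdf nu x] = set0.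
  by apply/seteqP; split => x //= h; apply: hn; exists x.
by [].
Qed.
End S.

Theorem theorem2 (R : realType) (nu M : nat) (hnu : (1 <= nu)%N) (hM : (1 <= M)%N)
  (K : 'I_M -> R) :
  \big[Order.min/1]_(i < M) conf_level nu (K i) <= global_conf_level nu K.
Proof.
set m := \big[Order.min/1]_(i < M) conf_level nu (K i).
rewrite /global_conf_level.
set G := [set c : R | _].
have Gub : has_ubound G by exists 1 => x [/andP[_ /ltW]].
have sG0 : 0 <= sup G.
  have [[x hx]|h] := pselect (G !=set0).
    apply: le_trans (ub_le_sup Gub hx); case: hx => /andP[/ltW] //.
  have -> : G = set0 by apply/seteqP; split => x // hx; apply: h; exists x.
  by rewrite sup0.
have m1 : m <= 1 by exact: bigmin_le_id.
have inG : forall c, 0 < c -> c < m -> G c.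
  move=> c c0 cm; split; first by apply/andP; split => //; exact: lt_le_trans cm m1.
  apply: ltr_sum.
    by apply/hasP; exists (Ordinal hM) => //; rewrite mem_index_enum.
  move=> i _.
  have cmi : c < conf_level nu (K i) by apply: lt_le_trans cm (bigmin_le _ _ _).
  move: cmi; rewrite /conf_level; set L := [set c : R | _] => cmi.
  have L0 : L !=set0.
    apply/set0P/negP => /eqP L0; move: cmi; rewrite L0 sup0 => h.
    by have := lt_trans c0 h; rewrite ltxx.
  have [y [/andP[y0 y1] hy] cy] := sup_gt L0 cmi.
  apply: le_lt_trans hy; apply: q_mono => //; exact: ltW.
have key : forall c, 0 < c -> c < m -> c <= sup G.
  by move=> c c0 cm; apply: ub_le_sup => //; exact: inG.
rewrite leNgt; apply/negP => hlt.
have := key ((sup G + m) / 2).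
lra.
Qed.
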